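(* Let $n>5$ be prime and let $\gamma$ be a probability distribution on $\mathbb{Z}_n$ with $\gamma(k)\in\mathbb{Q}$ for all $k$. Suppose $\hat{\gamma}(x)=\hat{\gamma}(y)$ for some $x,y\in\mathbb{Z}_n\setminus\{0\}$. Then $\gamma(kx^{-1}y)=\gamma(k)$ for all $k\in\mathbb{Z}_n$, where all operations are in the field $\mathbb{Z}_n$.
   Context: $\hat{\gamma}(x)=\sum_{k\in\mathbb{Z}_n}\omega_n^{kx}\gamma(k)$ with $\omega_n=e^{-2\pi i/n}$. *)

(* Defs.v *)
From HB Require Import structures.
From mathcomp Require Import all_boot all_order all_algebra.
From mathcomp Require Import complex.
From mathcomp Require Import reals trigo.
Set Implicit Arguments. Unset Strict Implicit. Unset Printing Implicit Defensive.
Import Order.TTheory GRing.Theory Num.Theory.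
Local Open Scope ring_scope.
Local Open Scope complex_scope.

(* omega_n = e^{-2 pi i / n} = cos(2 pi / n) - i sin(2 pi / n), in R[i] *)
Definition omega (R : realType) (n : nat) : R[i] :=
  (cos (2 * pi / n%:R))%:C - 'i * (sin (2 * pi / n%:R))%:C.

Definition fhat (R : realType) (n : nat) (gamma : 'Z_n -> rat) (x : 'Z_n) : R[i] :=
  \sum_(k : 'Z_n) omega R n ^+ (nat_of_ord (k * x)) * ratr (gamma k).

(* Main.v *)
Require Import Defs.
From HB Require Import structures.
From mathcomp Require Import all_boot all_order all_algebra all_field.
Import Order.TTheory GRing.Theory Num.Theory.
Set Implicit Arguments. Unset Strict Implicit. Unset Printing Implicit Defensive.
Local Open Scope ring_scope.

Definition PhiQ (n : nat) : {poly rat} := \sum_(i < n) 'X^i.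

Lemma PhiQ_mul n : ('X - 1) * PhiQ n = 'X^n - 1.
Proof. by rewrite /PhiQ subrX1. Qed.

Lemma size_PhiQ n : (0 < n)%N -> size (PhiQ n) = n.
Proof.
move=> n0; have := congr1 (fun p : {poly rat} => size p) (PhiQ_mul n).
have nz : PhiQ n != 0.
  apply/eqP=> E; move: (PhiQ_mul n); rewrite E mulr0 => /eqP.
  by rewrite eq_sym -size_poly_eq0 size_Xn_sub_1.
rewrite size_mul ?polyXsubC_eq0 // ?size_Xn_sub_1 //.
  by rewrite -[1]/(1%:P) size_XsubC; case.
Qed.

Lemma horner_PhiQ (F : numFieldType) n (w : F) :
  (map_poly ratr (PhiQ n)).[w] = \sum_(i < n) w ^+ i.
Proof.
rewrite /PhiQ rmorph_sum horner_sum; apply: eq_bigr => i _.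
by rewrite rmorphXn /= map_polyX hornerXn.
Qed.

Lemma root_PhiQ (F : numFieldType) n (w : F) : w != 1 -> w ^+ n = 1 ->
  root (map_poly ratr (PhiQ n)) w.
Proof.
move=> w1 wn; rewrite /root horner_PhiQ.
have : (w - 1) * \sum_(i < n) w ^+ i = 0 by rewrite -subrX1 wn subrr.
by move/eqP; rewrite mulf_eq0 subr_eq0 (negbTE w1).
Qed.

Lemma algC_part n (pn : prime n) (z : algC) (pz : n.-primitive_root z)
  (q : {poly rat}) : root (map_poly ratr q) z -> PhiQ n %| q.
Proof.
have n1 : (1 < n)%N by apply: prime_gt1.
have z1 : z != 1.
  apply/eqP=> E; have := prim_order_dvd pz 1; rewrite expr1 E eqxx.
  by rewrite dvdn1 => /eqP En; rewrite En in n1.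
have zn : z ^+ n = 1 by apply: prim_expr_order.
have [p [Dp monp] dv] := minCpolyP z.
rewrite dv => pq.
suff E : p %= PhiQ n by rewrite -(eqp_dvdl _ E).
have pP : p %| PhiQ n by rewrite -dv root_PhiQ.
rewrite -dvdp_size_eqp // size_PhiQ ?prime_gt0 //.
have : size (map_poly ratr p : {poly algC}) = size p by rewrite size_map_poly.
rewrite -Dp (minCpoly_cyclotomic pz) size_cyclotomic totient_prime // => <-.
by rewrite prednK ?prime_gt0.
Qed.

Lemma transfer (F : numFieldType) n (pn : prime n) (w : F) (hw1 : w != 1)
  (hwn : w ^+ n = 1) (q : {poly rat}) :
  root (map_poly ratr q) w -> PhiQ n %| q.
Proof.
move=> rq.
have n0 : (0 < n)%N by apply: prime_gt0.
have [z pz] := C_prim_root_exists n0.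
have Pnz : PhiQ n != 0 by rewrite -size_poly_eq0 size_PhiQ // -lt0n.
set g := gcdp q (PhiQ n).
have [[u v] /= E] := Bezoutp q (PhiQ n).
have rg : root (map_poly ratr g) w.
  have /eqpP [[c1 c2] /= /andP [c10 c20] Ec] := E.
  have := congr1 (fun r => (map_poly ratr r).[w]) Ec; rewrite /=.
  rewrite !linearZ /= !hornerZ rmorphD !rmorphM /= hornerD !hornerM.
  rewrite (eqP rq) (eqP (root_PhiQ hw1 hwn)) !mulr0 addr0 mulr0 => /esym/eqP.
  by rewrite mulf_eq0 fmorph_eq0 (negbTE c20).
have g2 : (1 < size g)%N.
  rewrite ltnNge; apply/negP => /size1_polyC Eg.
  move: rg; rewrite Eg map_polyC /= /root hornerC fmorph_eq0 => /eqP c0.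
  have : g == 0 by rewrite Eg c0.
  by rewrite gcdp_eq0 (negbTE Pnz) andbF.
have /dvdpP [h Eh] : g %| PhiQ n by apply: dvdp_gcdr.
have : root (map_poly ratr (PhiQ n)) z.
  apply: root_PhiQ; last exact: prim_expr_order.
  apply/eqP=> E1; have := prim_order_dvd pz 1; rewrite expr1 E1 eqxx.
  by rewrite dvdn1 => /eqP En; rewrite En in pn.
rewrite {1}Eh rmorphM /root hornerM mulf_eq0 => /orP [rh | rg'].
  have /(algC_part pn pz) hP : root (map_poly ratr h) z by [].
  have h0 : h != 0 by apply: contraNneq Pnz; rewrite Eh => ->; rewrite mul0r.
  have L := dvdp_leq h0 hP; rewrite size_PhiQ // in L.
  have g0 : g != 0 by rewrite -size_poly_eq0 -lt0n ltnW.
  have := congr1 (fun p : {poly rat} => size p) Eh; rewrite size_mul // size_PhiQ // => En.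
  exfalso; move: En L g2; case: (size g) => [|[|k]] //= .
  rewrite addnS /= => ->.
  by rewrite addnS ltnNge leq_addr.
have /(algC_part pn pz) hP : root (map_poly ratr g) z by [].
exact: dvdp_trans hP (dvdp_gcdl _ _).
Qed.
From mathcomp Require Import complex.
From mathcomp Require Import reals trigo.
From mathcomp Require Import ring.
Local Open Scope complex_scope.

Definition cis (R : realType) (t : R) : R[i] := (cos t)%:C - 'i * (sin t)%:C.
Lemma cisE (R : realType) (t : R) : cis t = (cos t +i* (- sin t))%C.
Proof.
rewrite /cis; apply/eqP; rewrite eq_complex /=.
by apply/andP; split; apply/eqP; ring.
Qed.

Lemma cisM (R : realType) (s t : R) : cis s * cis t = cis (s + t).
Proof.
rewrite !cisE cosD sinD; apply/eqP; rewrite eq_complex /=.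
by apply/andP; split; apply/eqP; ring.
Qed.

Lemma cisX (R : realType) (t : R) k : cis t ^+ k = cis (t *+ k).
Proof.
elim: k => [|k IH].
  by rewrite expr0 mulr0n cisE cos0 sin0 oppr0.
by rewrite exprS IH cisM mulrS.
Qed.

Lemma omega_cis (R : realType) n : omega R n = cis (2 * pi / n%:R).
Proof. by []. Qed.

Lemma omegaX (R : realType) n : (0 < n)%N -> omega R n ^+ n = 1.
Proof.
move=> n0; rewrite omega_cis cisX -[X in cis X]mulr_natr divfK ?pnatr_eq0 -?lt0n //.
by rewrite cisE mulr_natl cos2pi sin2pi oppr0.
Qed.

Lemma omega_neq1 (R : realType) n : (2 < n)%N -> omega R n != 1.
Proof.
move=> n2; rewrite omega_cis cisE; apply/eqP => /(congr1 (@complex.Im _)) /=.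
move=> /eqP; rewrite oppr_eq0; apply/negP; rewrite gt_eqF //.
apply: sin_gt0_pi; apply/andP; split.
  by rewrite divr_gt0 ?mulr_gt0 ?pi_gt0 ?ltr0n // (ltn_trans _ n2).
rewrite ltr_pdivrMr ?ltr0n ?(ltn_trans _ n2) //.
rewrite mulrC ltr_pM2l ?pi_gt0 // ltr_nat.
by [].
Qed.

Lemma Zp_unit n (n1 : (1 < n)%N) (pn : prime n) (a : 'Z_n) : a != 0 -> a \is a GRing.unit.
Proof.
move=> a0; rewrite -(natr_Zp a) unitZpE // prime_coprime //.
have apos : (0 < a)%N.
  rewrite lt0n; apply: contra a0 => /eqP h; apply/eqP/val_inj; exact: h.
have alt : (a < n)%N by apply: (leq_trans (ltn_ord a)); rewrite Zp_cast.
by rewrite gtnNdvd.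
Qed.

Lemma reindex_Zp n (V : nmodType) (a : 'Z_n) (F : 'Z_n -> V) :
  a \is a GRing.unit -> \sum_(k : 'Z_n) F (k * a) = \sum_(j : 'Z_n) F j.
Proof.
move=> au; rewrite (reindex (fun j => j * a^-1)) /=.
  by apply: eq_bigr => j _; rewrite mulrVK.
by exists (fun k => k * a) => k _; rewrite ?mulrK ?mulrVK.
Qed.

Lemma fhat_reindex (R : realType) n (gamma : 'Z_n -> rat) (a : 'Z_n) :
  a \is a GRing.unit ->
  fhat R gamma a = \sum_(j : 'Z_n) omega R n ^+ (nat_of_ord j) * ratr (gamma (j * a^-1)).
Proof.
move=> au; rewrite /fhat -(reindex_Zp (fun j => omega R n ^+ (nat_of_ord j) * ratr (gamma (j * a^-1))) au).
by apply: eq_bigr => k _; rewrite mulrK.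
Qed.

Local Close Scope complex_scope.
Unset Implicit Arguments.

Theorem lemma1 (R : realType) (n : nat) (n_prime : prime n) (n_gt5 : (5 < n)%N)
  (gamma : 'Z_n -> rat)
  (gamma_ge0 : forall k, 0 <= gamma k)
  (gamma_sum : \sum_(k : 'Z_n) gamma k = 1)
  (x y : 'Z_n) (hx : x != 0) (hy : y != 0)
  (hxy : fhat R gamma x = fhat R gamma y) :
  forall k : 'Z_n, gamma (k * x^-1 * y) = gamma k.
Proof.
have n1 : (1 < n)%N by apply: prime_gt1.
have n0 : (0 < n)%N by apply: prime_gt0.
have xu := Zp_unit n1 n_prime hx.
have yu := Zp_unit n1 n_prime hy.
pose D (j : 'Z_n) := gamma (j * x^-1) - gamma (j * y^-1).
pose q : {poly rat} := \sum_(j : 'Z_n) D j *: 'X^(nat_of_ord j).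
have coefq m : q`_m = \sum_(j : 'Z_n) D j * (m == nat_of_ord j)%:R.
  by rewrite /q coef_sum; apply: eq_bigr => j _; rewrite coefZ coefXn.
have rq : root (map_poly ratr q) (omega R n).
  rewrite /root /q rmorph_sum horner_sum.
  have -> : \sum_(j : 'Z_n) (map_poly ratr (D j *: 'X^(nat_of_ord j))).[omega R n]
     = fhat R gamma x - fhat R gamma y.
    rewrite (fhat_reindex R gamma xu) (fhat_reindex R gamma yu) -sumrB.
    apply: eq_bigr => j _.
    by rewrite map_polyZ hornerZ rmorphXn /= map_polyX hornerXn /D rmorphB /= -mulrBr mulrC.
  by rewrite hxy subrr eqxx.
have [r Er] : exists r, q = r * PhiQ n.
  by apply/dvdpP; exact: (transfer n_prime (omega_neq1 R (ltn_trans _ n_gt5)) (omegaX R n0) rq).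
have sq : (size q <= n)%N.
  apply/leq_sizeP => m mn; rewrite coefq big1 // => j _.
  have : (nat_of_ord j < n)%N by apply: (leq_trans (ltn_ord j)); rewrite Zp_cast.
  by move=> jn; rewrite (_ : (m == j) = false) ?mulr0 //; apply/negbTE; rewrite neq_ltn (leq_trans jn mn) orbT.
have sr : (size r <= 1)%N.
  have [->|rn0] := eqVneq r 0; first by rewrite size_poly0.
  have Pnz : PhiQ n != 0 by rewrite -size_poly_eq0 size_PhiQ // -lt0n.
  move: sq; rewrite Er size_mul // size_PhiQ //.
  case: (size r) => [|[|k]] //=; rewrite !addSn /=.
  by rewrite ltnNge leq_addl.
have q1 : q.[1] = 0.
  rewrite /q horner_sum.
  rewrite (eq_bigr (fun j => D j)); last by move=> j _; rewrite hornerZ hornerXn expr1n mulr1.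
  have xu' : x^-1 \is a GRing.unit by rewrite unitrV.
  have yu' : y^-1 \is a GRing.unit by rewrite unitrV.
  rewrite /D sumrB (reindex_Zp (fun j => gamma j) xu').
  by rewrite (reindex_Zp (fun j => gamma j) yu') subrr.
have q0 : q = 0.
  move: q1; rewrite Er (size1_polyC sr) hornerM hornerC.
  have -> : (PhiQ n).[1] = n%:R.
    rewrite /PhiQ horner_sum (eq_bigr (fun _ => 1)); last by move=> i _; rewrite hornerXn expr1n.
    by rewrite sumr_const card_ord.
  move/eqP; rewrite mulf_eq0 pnatr_eq0 -[n == 0%N]negbK -lt0n n0 orbF => /eqP ->.
  by rewrite mul0r.
have Dj j : D j = 0.
  have := coefq (nat_of_ord j); rewrite q0 coef0 (bigD1 j) //= eqxx mulr1 big1 ?addr0.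
    by move->.
  move=> i ij; rewrite (_ : (nat_of_ord j == nat_of_ord i) = false) ?mulr0 //.
  by apply/negbTE; apply: contra ij => /eqP/val_inj ->.
move=> k; have := Dj (k * y); rewrite /D mulrK // => /eqP; rewrite subr_eq0 => /eqP <-.
by rewrite mulrAC.
Qed.
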